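(* Let $n,d\ge 1$. Let $W=(w_{i,j})$ and $\widetilde W=(\tilde w_{i,j})$ be real $n\times n$ matrices and let $G,\widetilde G$ be real $nd\times nd$ block matrices with $d\times d$ blocks $G_{i,j},\widetilde G_{i,j}$. Suppose that for some $\varepsilon,\eta\ge 0$, $$\sup_{i,j}|\tilde w_{i,j}-w_{i,j}|\le \varepsilon,\qquad \sup_{i,j}\|\widetilde G_{i,j}-G_{i,j}\|_F\le \eta,$$ and that there is $C>0$ with $0\le w_{i,j}\le C$ for all $i,j$, $\sup_{i,j}\|G_{i,j}\|_F\le C$ and $\sup_{i,j}\|\widetilde G_{i,j}\|_F\le C$. If $\inf_i \frac1n\sum_{j\neq i}w_{i,j}>\gamma$ and $\gamma>\varepsilon$, then $$\|L(W,G)-L(\widetilde W,\widetilde G)\|_{op}\le \frac{1}{\gamma}C(\eta+\varepsilon)+\frac{\varepsilon}{\gamma(\gamma-\varepsilon)}C^2 .$$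
   Context: For an $n\times n$ matrix $W=(w_{i,j})$ and an $nd\times nd$ block matrix $G$ with $d\times d$ blocks $G_{i,j}$, define $S$ as the $nd\times nd$ block matrix with blocks $S_{i,j}=w_{i,j}G_{i,j}$, and $D$ as the $nd\times nd$ block-diagonal matrix with diagonal blocks $D_{i,i}=\big(\sum_{j\neq i}w_{i,j}\big)\mathrm{I}_d$ (assumed invertible). Then $L(W,G):=D^{-1}S$. $\|\cdot\|_{op}$ is the largest singular value and $\|\cdot\|_F$ the Frobenius norm. *)

(* Defs.v *)
From HB Require Import structures.
From mathcomp Require Import all_boot all_order all_algebra.
From mathcomp Require Import all_classical all_reals.
From mathcomp Require Import zify.
Set Implicit Arguments. Unset Strict Implicit. Unset Printing Implicit Defensive.
Import Order.TTheory GRing.Theory Num.Theory.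
Local Open Scope classical_set_scope.
Local Open Scope ring_scope.

(* Block indexing of 'I_(n*d): global index a = i*d + k with block i, offset k. *)
Lemma bidx_lt (n d : nat) (i : 'I_n) (k : 'I_d) : (i * d + k < n * d)%N.
Proof.
have hi := ltn_ord i; have hk := ltn_ord k.
have : (i.+1 * d <= n * d)%N by rewrite leq_mul2r hi orbT.
rewrite mulSn; lia.
Qed.

Definition bidx (n d : nat) (i : 'I_n) (k : 'I_d) : 'I_(n * d) :=
  Ordinal (bidx_lt i k).

Lemma blk_lt (n d : nat) (a : 'I_(n * d)) : (a %/ d < n)%N.
Proof.
have ha : (nat_of_ord a < n * d)%N := ltn_ord a.
move: (nat_of_ord a) ha => x ha.
have hd : (0 < d)%N by case: (posnP d) ha => [->|//]; rewrite muln0.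
by rewrite ltn_divLR.
Qed.

Definition blk (n d : nat) (a : 'I_(n * d)) : 'I_n := Ordinal (blk_lt a).

Section Defs.
Variable R : realType.

Definition block (n d : nat) (G : 'M[R]_(n * d)) (i j : 'I_n) : 'M[R]_d :=
  \matrix_(k, l) G (bidx i k) (bidx j l).

Definition frob (m p : nat) (A : 'M[R]_(m, p)) : R :=
  Num.sqrt (\sum_i \sum_j A i j ^+ 2).

Definition vnorm (m : nat) (x : 'cV[R]_m) : R :=
  Num.sqrt (\sum_i x i 0 ^+ 2).

Definition opnorm (m p : nat) (A : 'M[R]_(m, p)) : R :=
  sup [set vnorm (A *m x) | x in [set x : 'cV[R]_p | vnorm x = 1]].

(* S(W,G): blocks S_{i,j} = w_{i,j} G_{i,j} *)
Definition Smat (n d : nat) (W : 'M[R]_n) (G : 'M[R]_(n * d)) : 'M[R]_(n * d) :=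
  \matrix_(a, b) (W (blk a) (blk b) * G a b).

Definition degw (n : nat) (W : 'M[R]_n) (i : 'I_n) : R :=
  \sum_(j < n | j != i) W i j.

(* D(W): block diagonal with D_{i,i} = (sum_{j<>i} w_{i,j}) I_d *)
Definition Dmat (n d : nat) (W : 'M[R]_n) : 'M[R]_(n * d) :=
  diag_mx (\row_a degw W (blk a)).

Definition Lmat (n d : nat) (W : 'M[R]_n) (G : 'M[R]_(n * d)) : 'M[R]_(n * d) :=
  invmx (Dmat d W) *m Smat W G.

End Defs.

(* Main.v *)
Require Import Defs.
From HB Require Import structures.
From mathcomp Require Import all_boot all_order all_algebra.
From mathcomp Require Import all_classical all_reals.
From mathcomp Require Import ring lra zify.
Import Order.TTheory GRing.Theory Num.Theory.
Local Open Scope ring_scope.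
Set Implicit Arguments. Unset Strict Implicit.

Section Aux.
Variable R : realType.

Lemma cs (T : finType) (f g : T -> R) :
  (\sum_t f t * g t) ^+ 2 <= (\sum_t f t ^+ 2) * (\sum_t g t ^+ 2).
Proof.
have H : 0 <= \sum_s \sum_t (f s * g t - f t * g s) ^+ 2.
  by apply: sumr_ge0 => s _; apply: sumr_ge0 => t _; exact: sqr_ge0.
have A1 : \sum_s \sum_t (f s ^+ 2 * g t ^+ 2) = (\sum_t f t ^+ 2) * (\sum_t g t ^+ 2).
  by rewrite mulr_suml; apply: eq_bigr => s _; rewrite mulr_sumr.
have A2 : \sum_s \sum_t (f t ^+ 2 * g s ^+ 2) = (\sum_t f t ^+ 2) * (\sum_t g t ^+ 2).
  by rewrite exchange_big.
have A3 : \sum_s \sum_t ((f s * g s) * (f t * g t)) = (\sum_t f t * g t) ^+ 2.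
  by rewrite expr2 mulr_suml; apply: eq_bigr => s _; rewrite mulr_sumr.
have E : \sum_s \sum_t (f s * g t - f t * g s) ^+ 2 =
   \sum_s \sum_t (f s ^+ 2 * g t ^+ 2) + \sum_s \sum_t (f t ^+ 2 * g s ^+ 2)
   - 2%:R * \sum_s \sum_t ((f s * g s) * (f t * g t)).
  rewrite -big_split /= mulr_sumr -sumrB; apply: eq_bigr => s _.
  rewrite -big_split /= mulr_sumr -sumrB; apply: eq_bigr => t _.
  ring.
move: H; rewrite E A1 A2 A3; lra.
Qed.

Lemma sqrt_le (x c : R) : 0 <= c -> x <= c ^+ 2 -> Num.sqrt x <= c.
Proof.
move=> c0 h; rewrite -(ger0_norm c0) -sqrtr_sqr; exact: ler_wsqrtr.
Qed.

Definition nrm (T : finType) (f : T -> R) := Num.sqrt (\sum_t f t ^+ 2).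

Lemma nrm_ge0 (T : finType) (f : T -> R) : 0 <= nrm f.
Proof. exact: sqrtr_ge0. Qed.

Lemma nrm_sq (T : finType) (f : T -> R) : nrm f ^+ 2 = \sum_t f t ^+ 2.
Proof. by rewrite sqr_sqrtr // sumr_ge0 // => t _; exact: sqr_ge0. Qed.

Lemma cs_nrm (T : finType) (f g : T -> R) : \sum_t f t * g t <= nrm f * nrm g.
Proof.
have h := cs f g.
have p : 0 <= nrm f * nrm g by rewrite mulr_ge0 // nrm_ge0.
rewrite -(ger0_norm p) -sqrtr_sqr.
apply: le_trans (ler_norm _) _.
rewrite -sqrtr_sqr; apply: ler_wsqrtr; rewrite exprMn !nrm_sq //.
Qed.

Lemma nrm_tri (T : finType) (f g : T -> R) :
  nrm (fun t => f t + g t) <= nrm f + nrm g.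
Proof.
apply: sqrt_le; first by rewrite addr_ge0 // nrm_ge0.
have E : \sum_t (f t + g t) ^+ 2 =
  \sum_t f t ^+ 2 + 2%:R * \sum_t f t * g t + \sum_t g t ^+ 2.
  rewrite mulr_sumr -!big_split /=; apply: eq_bigr => t _; ring.
rewrite E -!nrm_sq; have := cs_nrm f g; nra.
Qed.

Lemma nrm_le (T : finType) (f g : T -> R) :
  (forall t, `|f t| <= g t) -> nrm f <= nrm g.
Proof.
move=> h; apply: ler_wsqrtr; apply: ler_sum => t _.
rewrite -real_normK ?num_real //.
have := h t; have := normr_ge0 (f t); nra.
Qed.

Lemma nrm_scale (T : finType) (c : R) (f : T -> R) :
  nrm (fun t => c * f t) = `|c| * nrm f.
Proof.
rewrite /nrm -sqrtr_sqr -sqrtrM ?sqr_ge0 // mulr_sumr; congr Num.sqrt.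
by apply: eq_bigr => t _; rewrite exprMn.
Qed.


Lemma nrm_abs (T : finType) (f : T -> R) : nrm (fun t => `|f t|) = nrm f.
Proof.
by rewrite /nrm; congr Num.sqrt; apply: eq_bigr => t _; rewrite real_normK ?num_real.
Qed.

Lemma frobE m p (A : 'M[R]_(m, p)) : frob A = nrm (fun q : 'I_m * 'I_p => A q.1 q.2).
Proof. by rewrite /frob /nrm pair_bigA. Qed.

Lemma vnorm_mulmx m p (A : 'M[R]_(m, p)) (x : 'cV[R]_p) :
  vnorm (A *m x) <= Num.sqrt (\sum_i \sum_j A i j ^+ 2) * vnorm x.
Proof.
rewrite /vnorm -sqrtrM; last by apply: sumr_ge0 => i _; apply: sumr_ge0 => j _; exact: sqr_ge0.
apply: ler_wsqrtr; rewrite mulr_suml; apply: ler_sum => i _; rewrite mxE.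
exact: (cs (fun j => A i j) (fun j => x j 0)).
Qed.

Lemma row_p n (i : 'I_n) (w : 'I_n -> R) (C g : R) :
  0 < g -> (forall j, 0 <= w j <= C) ->
  g < n%:R^-1 * (\sum_(j < n | j != i) w j) ->
  n%:R * (\sum_j (w j / (\sum_(j < n | j != i) w j)) ^+ 2) <= (C / g) ^+ 2.
Proof.
move=> g0 hw hg.
set d := \sum_(j < n | j != i) w j.
set N := n%:R.
have hn : (0 < n)%N by apply: (leq_ltn_trans _ (ltn_ord i)).
have N0 : 0 < N by rewrite /N ltr0n.
have Ngd : N * g < d by rewrite mulrC -ltr_pdivlMr // mulrC.
have d0 : 0 < d by nra.
have h1 : \sum_j (w j / d) ^+ 2 <= \sum_(j < n) (C / d) ^+ 2.
  apply: ler_sum => j _; have [h1 h2] := andP (hw j).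
  rewrite ler_sqr ?nnegrE ?divr_ge0 //; try lra.
  by rewrite ler_pM2r ?invr_gt0.
rewrite sumr_const card_ord -mulr_natl -/N in h1.
have C0 : 0 <= C by case/andP: (hw i); lra.
have h2 : N * (C / d) <= C / g.
  rewrite mulrA ler_pdivrMr // mulrAC ler_pdivlMr //; nra.
have h3 : 0 <= N * (C / d) by apply: mulr_ge0; [lra| apply: divr_ge0; lra].
have : (N * (C / d)) ^+ 2 <= (C / g) ^+ 2 by rewrite ler_sqr ?nnegrE //; lra.
have : N * (N * (C / d) ^+ 2) = (N * (C / d)) ^+ 2 by ring.
have := ler_wpM2l (ltW N0) h1.
lra.
Qed.

End Aux.

Section Idx.
Variables (n d : nat) (hd : (0 < d)%N).

Definition off (a : 'I_(n * d)) : 'I_d := Ordinal (ltn_pmod a hd).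

Lemma blk_bidx (i : 'I_n) (k : 'I_d) : blk (bidx i k) = i.
Proof.
apply: val_inj => /=. rewrite divnMDl // divn_small ?addn0 //.
Qed.

Lemma off_bidx (i : 'I_n) (k : 'I_d) : off (bidx i k) = k.
Proof.
apply: val_inj => /=. rewrite modnMDl modn_small //.
Qed.

Lemma bidx_blk (a : 'I_(n * d)) : bidx (blk a) (off a) = a.
Proof. apply: val_inj => /=; rewrite -divn_eq //. Qed.

Lemma sum_blocks (R : nmodType) (F : 'I_(n * d) -> R) :
  \sum_a F a = \sum_i \sum_k F (bidx i k).
Proof.
rewrite pair_bigA /=.
rewrite (reindex (fun p : 'I_n * 'I_d => bidx p.1 p.2)) //=.
exists (fun a => (blk a, off a)) => [[i k] _|a _] /=.
  by rewrite blk_bidx off_bidx.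
by rewrite bidx_blk.
Qed.
End Idx.

Lemma Lmat_entry (R : realType) n d (W : 'M[R]_n) (G : 'M[R]_(n * d))
  (hdeg : forall i, degw W i != 0) a b :
  Lmat W G a b = (degw W (blk a))^-1 * (W (blk a) (blk b) * G a b).
Proof.
set Dinv : 'M[R]_(n * d) := diag_mx (\row_a (degw W (blk a))^-1).
have H1 : Dinv *m Dmat d W = 1%:M.
  apply/matrixP => i j; rewrite mul_diag_mx !mxE.
  case: (eqVneq i j) => [->|nij] /=; first by rewrite mulr1n mulVf.
  by rewrite mulr0n mulr0.
have [_ uD] := mulmx1_unit H1.
have E : invmx (Dmat d W) = Dinv.
  by rewrite -[invmx _]mul1mx -H1 -mulmxA mulmxV // mulmx1.
by rewrite /Lmat E mul_diag_mx !mxE.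
Qed.

Section Row.
Variable R : realType.

Lemma sum_off_const n (i : 'I_n) (c : R) :
  \sum_(j < n | j != i) c = (n%:R - 1) * c.
Proof.
rewrite sumr_const cardC1 card_ord.
case: n i => [[]//|n] i /=; rewrite -mulr_natl; ring.
Qed.

Lemma P1 (N d e b C : R) : 1 <= N -> 0 <= e -> 0 <= b -> b <= (N - 1) * e ->
  N * e <= d -> d <= N * C -> 0 < C ->
  N * ((e * d + b * C) ^+ 2 + 2%:R * (N - 1) * b * C * e * d - b ^+ 2 * C * d
       - 2%:R * b * e * d ^+ 2 + (N - 1) * e ^+ 2 * d ^+ 2)
  <= (d * (N * e - b) + N ^+ 2 * C * e) ^+ 2.
Proof.
move=> N1 e0 b0 bN Nd dC C0.
set P := 2%:R * N ^+ 2 * e ^+ 2 - 4%:R * N * e * b + b ^+ 2.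
set Q := 3%:R * N ^+ 3 * e ^+ 2 - 4%:R * N ^+ 2 * e * b + (N - 1) * b ^+ 2.
rewrite -subr_ge0.
have -> : (d * (N * e - b) + N ^+ 2 * C * e) ^+ 2 -
  N * ((e * d + b * C) ^+ 2 + 2%:R * (N - 1) * b * C * e * d - b ^+ 2 * C * d
       - 2%:R * b * e * d ^+ 2 + (N - 1) * e ^+ 2 * d ^+ 2) =
  d ^+ 2 * b ^+ 2 + C * d * N * P + C ^+ 2 * N * (N ^+ 3 * e ^+ 2 - b ^+ 2).
  rewrite /P; ring.
have bNe : b <= N * e by nra.
have h3 : 0 <= N ^+ 3 * e ^+ 2 - b ^+ 2.
  have : b ^+ 2 <= (N * e) ^+ 2 by nra.
  have : (N * e) ^+ 2 <= N ^+ 3 * e ^+ 2.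
    rewrite exprMn; apply: ler_wpM2r; first exact: sqr_ge0.
    rewrite expr2 exprS expr2; nra.
  lra.
have d0 : 0 <= d by nra.
have hQ : 0 <= Q.
  have ->: Q = ((N - 1) * e - b) * (4%:R * N ^+ 2 * e - (N - 1) * (b + (N - 1) * e))
             + e ^+ 2 * (N ^+ 2 + 3%:R * N - 1) by rewrite /Q; ring.
  apply: addr_ge0; last by apply: mulr_ge0; [exact: sqr_ge0| nra].
  apply: mulr_ge0; first lra.
  have : (N - 1) * (b + (N - 1) * e) <= (N - 1) * (2%:R * (N - 1) * e) by nra.
  nra.
case: (lerP 0 P) => hP.
  have : 0 <= C * d * N * P by rewrite !mulr_ge0 //; lra.
  have : 0 <= C ^+ 2 * N * (N ^+ 3 * e ^+ 2 - b ^+ 2) by apply: mulr_ge0; [apply: mulr_ge0; [exact: sqr_ge0| lra]|lra].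
  have := sqr_ge0 (d * b); rewrite exprMn; lra.
have : C * N * N * C * P <= C * d * N * P.
  have : 0 <= C * N * (P * (d - N * C)) by apply: mulr_ge0; [apply: mulr_ge0; lra| nra].
  lra.
have -> : C * N * N * C * P = C ^+ 2 * N * (N * P) by ring.
have : 0 <= C ^+ 2 * N * Q by apply: mulr_ge0; [apply: mulr_ge0; [exact: sqr_ge0| lra]|lra].
have -> : C ^+ 2 * N * Q = C ^+ 2 * N * (N ^+ 3 * e ^+ 2 - b ^+ 2) + C ^+ 2 * N * (N * P)
  by rewrite /Q /P; ring.
have := sqr_ge0 (d * b); rewrite exprMn; lra.
Qed.

Lemma P2 (N d dt e b C g X : R) : 1 <= N -> 0 <= e -> e < g -> 0 < C ->
  N * g < d -> 0 <= b -> b <= (N - 1) * e -> d - b <= dt ->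
  X = d * (N * e - b) + N ^+ 2 * C * e ->
  X <= (e / g + e * C / (g * (g - e))) * (d * dt).
Proof.
move=> N1 e0 eg C0 Ngd b0 bN ddt ->.
have g0 : 0 < g by lra.
have ge0 : 0 < g - e by lra.
have dt0 : N * (g - e) <= dt by nra.
have -> : e / g + e * C / (g * (g - e)) = (e * (g - e) + e * C) / (g * (g - e)).
  by field; apply/andP; split; apply/lt0r_neq0.
rewrite [X in _ <= X]mulrAC ler_pdivlMr; last exact: mulr_gt0.
have h1 : (N * e - b) * g <= e * dt by nra.
have h2 : N ^+ 2 * (g * (g - e)) <= d * dt.
  rewrite expr2 -mulrACA; apply: ler_pM; nra.
have d0 : 0 < d by nra.
have : d * ((N * e - b) * g) * (g - e) <= d * (e * dt) * (g - e).
  apply: ler_wpM2r; first lra. by apply: ler_wpM2l; lra.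
have : C * e * (N ^+ 2 * (g * (g - e))) <= C * e * (d * dt).
  by apply: ler_wpM2l => //; nra.
nra.
Qed.

Lemma row_bound n (i : 'I_n) (w wt : 'I_n -> R) (e C g : R) :
  0 <= e -> e < g -> 0 < C -> (forall j, 0 <= w j <= C) ->
  (forall j, `|wt j - w j| <= e) ->
  g < n%:R^-1 * (\sum_(j < n | j != i) w j) ->
  0 < \sum_(j < n | j != i) wt j /\
  n%:R * (\sum_j (w j / (\sum_(j < n | j != i) w j)
                   - wt j / (\sum_(j < n | j != i) wt j)) ^+ 2)
    <= (e / g + e * C / (g * (g - e))) ^+ 2.
Proof.
move=> e0 eg C0 hw hwt hg.
set d := \sum_(j < n | j != i) w j.
set dt := \sum_(j < n | j != i) wt j.
set N := n%:R.
have hn : (0 < n)%N by apply: (leq_ltn_trans _ (ltn_ord i)).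
have N1 : 1 <= N by rewrite /N ler1n.
have N0 : 0 < N by lra.
have Ngd : N * g < d by rewrite mulrC -ltr_pdivlMr // mulrC.
set D := dt - d.
have DE : D = \sum_(j < n | j != i) (wt j - w j) by rewrite /D sumrB.
have Db : `|D| <= (N - 1) * e.
  rewrite DE -(sum_off_const i); apply: le_trans (ler_norm_sum _ _ _) _.
  by apply: ler_sum => j _.
set b := `|D| in Db *.
have b0 : 0 <= b by exact: normr_ge0.
have d0 : 0 < d by nra.
have dtE : dt = d + D by rewrite /D; ring.
have ddt : d - b <= dt by rewrite dtE; have := ler_norm (- D); rewrite normrN -/b; lra.
have dt0 : 0 < dt.
  have : 0 < N * (g - e) by apply: mulr_gt0; lra.
  have : N * (g - e) = N * g - N * e by ring.
  have : (N - 1) * e = N * e - e by ring.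
  lra.
split => //.
set sg : R := if D < 0 then -1 else 1.
have sgD : sg * D = b by rewrite /sg /b; case: ltrP => h; [rewrite ltr0_norm //; ring | rewrite ger0_norm //; ring].
have sg2 : sg ^+ 2 = 1 by rewrite /sg; case: ltrP => _; ring.
set t := b / d.
have t0 : 0 <= t by rewrite /t divr_ge0 //; lra.
have tb : t * d = b by rewrite /t divfK //; apply/lt0r_neq0.
pose z j := w j * D / d - (wt j - w j).
have zE : forall j, w j / d - wt j / dt = z j / dt.
  move=> j; rewrite /z dtE; field; apply/andP; split; apply/lt0r_neq0 => //; lra.
under eq_bigr do rewrite zE expr_div_n.
rewrite -mulr_suml.
set S := (e + t * C) ^+ 2 + t ^+ 2 * C * d - 2%:R * t * e * d - 2%:R * t * C * b
         + (N - 1) * (2%:R * t * C * e + e ^+ 2).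
have hzi : z i ^+ 2 <= (e + t * C) ^+ 2.
  have h1 : `|z i| <= e + t * C.
    have [hw1 hw2] := andP (hw i).
    have e1 : `|w i * D / d| = t * w i.
      have id0 : 0 < d^-1 by rewrite invr_gt0.
      rewrite !normrM (ger0_norm hw1) (gtr0_norm id0) /t -/b.
      ring.
    rewrite /z; apply: le_trans (ler_normB _ _) _.
    rewrite e1; have := hwt i.
    have : t * w i <= t * C by apply: ler_wpM2l.
    lra.
  rewrite -real_normK ?num_real //; have := normr_ge0 (z i); nra.
have hzj : forall j, j != i ->
    z j ^+ 2 <= (t ^+ 2 * C - 2%:R * t * e) * w j + (- 2%:R * t * C * sg) * (wt j - w j)
                + (2%:R * t * C * e + e ^+ 2).
  move=> j _; have [h1 h2] := andP (hw j); have h3 := hwt j.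
  have zj : z j = sg * t * w j - (wt j - w j).
    have DE2 : D = sg * b by rewrite -sgD mulrA -expr2 sg2 mul1r.
    by rewrite /z /t DE2; ring.
  rewrite zj.
  set x := wt j - w j.
  have hx : - e <= sg * x <= e.
    have : `|sg * x| <= e by rewrite normrM /sg; case: ltrP => _; rewrite ?normrN normr1 mul1r.
    by rewrite ler_norml.
  case/andP: hx => hx1 hx2.
  have hx3 : x ^+ 2 <= e ^+ 2.
    by rewrite -real_normK ?num_real //; have := normr_ge0 x; nra.
  have ww : w j ^+ 2 <= C * w j by nra.
  have key : w j * (e - sg * x) <= C * (e - sg * x) by nra.
  have -> : (sg * t * w j - x) ^+ 2 = sg ^+ 2 * t ^+ 2 * w j ^+ 2 - 2%:R * t * w j * (sg * x) + x ^+ 2 by ring.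
  rewrite sg2 mul1r.
  have : t ^+ 2 * w j ^+ 2 <= t ^+ 2 * (C * w j) by apply: ler_wpM2l => //; exact: sqr_ge0.
  have : t * (w j * (e - sg * x)) <= t * (C * (e - sg * x)) by apply: ler_wpM2l.
  nra.
have hS : \sum_j z j ^+ 2 <= S.
  rewrite (bigD1 i) //=.
  have : \sum_(j | j != i) z j ^+ 2 <=
     \sum_(j | j != i) ((t ^+ 2 * C - 2%:R * t * e) * w j + (- 2%:R * t * C * sg) * (wt j - w j)
                + (2%:R * t * C * e + e ^+ 2)).
    exact: ler_sum.
  rewrite !big_split /= -!mulr_sumr -DE -/d (sum_off_const i).
  have : - 2%:R * t * C * sg * D = - 2%:R * t * C * b by rewrite -sgD; ring.
  rewrite /S; lra.
have Ned : N * e <= d by nra.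
have dC : d <= N * C.
  have : d <= (N - 1) * C.
    rewrite -(sum_off_const i); apply: ler_sum => j _; by case/andP: (hw j).
  lra.
have HP1 := P1 N1 e0 b0 Db Ned dC C0.
have eqS : (e * d + b * C) ^+ 2 + 2%:R * (N - 1) * b * C * e * d - b ^+ 2 * C * d
       - 2%:R * b * e * d ^+ 2 + (N - 1) * e ^+ 2 * d ^+ 2 = d ^+ 2 * S.
  by rewrite /S -tb; ring.
rewrite eqS in HP1.
set T := e / g + e * C / (g * (g - e)).
set X := d * (N * e - b) + N ^+ 2 * C * e in HP1 *.
have HP2 : X <= T * (d * dt) by apply: (P2 N1 e0 eg C0 Ngd b0 Db ddt).
have X0 : 0 <= X.
  rewrite /X; apply: addr_ge0; first by apply: mulr_ge0; nra.
  by apply: mulr_ge0; [apply: mulr_ge0; [exact: sqr_ge0|lra]|lra].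
have HX : X ^+ 2 <= (T * (d * dt)) ^+ 2 by rewrite ler_sqr ?nnegrE //; lra.
have H3 : N * S * d ^+ 2 <= T ^+ 2 * dt ^+ 2 * d ^+ 2.
  have e1 : N * S * d ^+ 2 = N * (d ^+ 2 * S) by ring.
  have e2 : (T * (d * dt)) ^+ 2 = T ^+ 2 * dt ^+ 2 * d ^+ 2 by ring.
  lra.
have H4 : N * S <= T ^+ 2 * dt ^+ 2.
  by rewrite -(ler_pM2r (exprn_gt0 2 d0)).
have H5 : \sum_j z j ^+ 2 <= S := hS.
rewrite mulrA ler_pdivrMr ?exprn_gt0 //.
apply: le_trans H4; apply: ler_wpM2l; lra.
Qed.
End Row.

Theorem lemma2p1 (R : realType) (n d : nat) (hn : (1 <= n)%N) (hd : (1 <= d)%N)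
  (W Wt : 'M[R]_n) (G Gt : 'M[R]_(n * d)) (eps eta C gamma : R) :
  0 <= eps -> 0 <= eta ->
  (forall i j, `|Wt i j - W i j| <= eps) ->
  (forall i j, frob (block Gt i j - block G i j) <= eta) ->
  0 < C ->
  (forall i j, 0 <= W i j <= C) ->
  (forall i j, frob (block G i j) <= C) ->
  (forall i j, frob (block Gt i j) <= C) ->
  (forall i, gamma < n%:R^-1 * degw W i) ->
  eps < gamma ->
  opnorm (Lmat W G - Lmat Wt Gt)
    <= gamma^-1 * C * (eta + eps) + eps / (gamma * (gamma - eps)) * C ^+ 2.
Proof.
move=> e0 eta0 hWt hGd C0 hW hGb hGtb hg eg.
have g0 : 0 < gamma by lra.
set K := gamma^-1 * C * (eta + eps) + eps / (gamma * (gamma - eps)) * C ^+ 2.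
set T := eps / gamma + eps * C / (gamma * (gamma - eps)).
have KE : K = eta * (C / gamma) + C * T.
  rewrite /K /T; field; apply/andP; split; apply/lt0r_neq0 => //; lra.
have T0 : 0 <= T.
  rewrite /T; apply: addr_ge0; first by apply: divr_ge0; lra.
  apply: divr_ge0; first by apply: mulr_ge0; lra.
  by apply: mulr_ge0; lra.
have K0 : 0 <= K.
  rewrite KE; apply: addr_ge0; apply: mulr_ge0 => //; try lra.
  by apply: divr_ge0; lra.
set N : R := n%:R.
have N0 : 0 < N by rewrite /N ltr0n.
have hrow := fun i => row_bound e0 eg C0 (hW i) (hWt i) (hg i).
have hrowp := fun i => row_p g0 (hW i) (hg i).
have dpos : forall i, 0 < degw W i.
  move=> i; have h := hg i; rewrite mulrC ltr_pdivlMr // in h.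
  have : 0 < gamma * N by apply: mulr_gt0.
  lra.
have hdeg : forall i, degw W i != 0 by move=> i; apply/lt0r_neq0.
have hdegt : forall i, degw Wt i != 0 by move=> i; apply/lt0r_neq0; case: (hrow i).
pose p i j := W i j / degw W i.
pose q i j := Wt i j / degw Wt i.
set M := Lmat W G - Lmat Wt Gt.
have ME : forall a b, M a b = p (blk a) (blk b) * G a b - q (blk a) (blk b) * Gt a b.
  move=> a b; rewrite /M mxE (Lmat_entry _ hdeg) mxE (Lmat_entry _ hdegt) /p /q; ring.
have HF : \sum_a \sum_b M a b ^+ 2 <= K ^+ 2.
  have E : \sum_a \sum_b M a b ^+ 2 =
      \sum_i \sum_j \sum_k \sum_l M (bidx i k) (bidx j l) ^+ 2.
    rewrite (sum_blocks hd); apply: eq_bigr => i _.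
    under eq_bigr do rewrite (sum_blocks hd).
    exact: exchange_big.
  rewrite E.
  have Hi : forall i, N * \sum_j \sum_k \sum_l M (bidx i k) (bidx j l) ^+ 2 <= K ^+ 2.
    move=> i.
    pose u j := eta * p i j + C * `|p i j - q i j|.
    have p0 : forall j, 0 <= p i j.
      move=> j; rewrite /p; apply: divr_ge0; first by case/andP: (hW i j).
      exact: ltW.
    have hb : forall j, \sum_k \sum_l M (bidx i k) (bidx j l) ^+ 2 <= u j ^+ 2.
      move=> j.
      have -> : \sum_k \sum_l M (bidx i k) (bidx j l) ^+ 2 =
          nrm (fun kl : 'I_d * 'I_d => M (bidx i kl.1) (bidx j kl.2)) ^+ 2.
        by rewrite nrm_sq pair_bigA.
      have u0 : 0 <= u j by rewrite /u; apply: addr_ge0; apply: mulr_ge0 => //; lra.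
      rewrite ler_sqr ?nnegrE ?nrm_ge0 //.
      have -> : (fun kl : 'I_d * 'I_d => M (bidx i kl.1) (bidx j kl.2)) =
        (fun kl => (- p i j) * ((block Gt i j - block G i j) kl.1 kl.2)
                   + (p i j - q i j) * (block Gt i j) kl.1 kl.2).
        apply: funext => kl; rewrite ME !mxE !(blk_bidx hd); ring.
      apply: le_trans (nrm_tri _ _) _.
      rewrite !nrm_scale -!frobE normrN (ger0_norm (p0 j)) /u.
      apply: lerD.
        by rewrite [eta * _]mulrC; apply: ler_wpM2l.
      by rewrite [C * _]mulrC; apply: ler_wpM2l => //; exact: normr_ge0.
    apply: le_trans (ler_wpM2l (ltW N0) (ler_sum _ (fun j _ => hb j))) _.
    have -> : \sum_j u j ^+ 2 = nrm u ^+ 2 by rewrite nrm_sq.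
    have hu : nrm u <= eta * nrm (p i) + C * nrm (fun j => p i j - q i j).
      apply: le_trans (nrm_tri _ _) _.
      rewrite !nrm_scale nrm_abs (ger0_norm eta0) (gtr0_norm C0) //.
    have sN : 0 <= Num.sqrt N by exact: sqrtr_ge0.
    have hp : Num.sqrt N * nrm (p i) <= C / gamma.
      rewrite /nrm -sqrtrM; last exact: ltW.
      apply: sqrt_le; first by apply: divr_ge0; lra.
      exact: hrowp.
    have hpq : Num.sqrt N * nrm (fun j => p i j - q i j) <= T.
      rewrite /nrm -sqrtrM; last exact: ltW.
      apply: sqrt_le => //.
      by case: (hrow i).
    have hK : Num.sqrt N * nrm u <= K.
      rewrite KE; apply: le_trans (ler_wpM2l sN hu) _.
      have : Num.sqrt N * (eta * nrm (p i)) <= eta * (C / gamma).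
        rewrite mulrCA; exact: ler_wpM2l.
      have : Num.sqrt N * (C * nrm (fun j => p i j - q i j)) <= C * T.
        rewrite mulrCA; apply: ler_wpM2l; [lra| exact: hpq].
      rewrite mulrDr; lra.
    have : N * nrm u ^+ 2 = (Num.sqrt N * nrm u) ^+ 2.
      by rewrite exprMn (sqr_sqrtr (ltW N0)).
    move=> ->; rewrite ler_sqr ?nnegrE //; apply: mulr_ge0 => //; exact: nrm_ge0.
  have : \sum_i \sum_j \sum_k \sum_l M (bidx i k) (bidx j l) ^+ 2 <= \sum_(i < n) K ^+ 2 / N.
    apply: ler_sum => i _; rewrite ler_pdivlMr // mulrC; exact: Hi.
  rewrite sumr_const card_ord -mulr_natl -/N mulrC divfK //; exact: lt0r_neq0.
rewrite /opnorm; apply: ge_sup.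
  have nd0 : (0 < n * d)%N by rewrite muln_gt0; apply/andP.
  pose a0 : 'I_(n * d) := Ordinal nd0.
  pose x0 : 'cV[R]_(n * d) := \col_b ((b == a0)%:R).
  exists (vnorm (M *m x0)); exists x0 => //=.
  rewrite /vnorm (bigD1 a0) //= big1 ?addr0; first by rewrite !mxE eqxx expr1n sqrtr1.
  by move=> b hb; rewrite !mxE (negbTE hb) expr0n.
move=> y [x hx <-]; move: hx => /= hx.
apply: le_trans (vnorm_mulmx _ _) _.
rewrite hx mulr1; exact: sqrt_le.
Qed.
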